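(* Fix nonnegative integers $k,\ell$. Let $\mathbf{P}:(\mathbb{Z}/2\mathbb{Z})^k\to\mathbb{R}[x]$ and $\mathbf{Q}:(\mathbb{Z}/2\mathbb{Z})^\ell\to\mathbb{R}[x]$, and define $\mathbf{S}:(\mathbb{Z}/2\mathbb{Z})^{k+\ell}\to\mathbb{R}[x]$ by $S_{\alpha\beta}=P_\alpha Q_\beta$ for $\alpha\in(\mathbb{Z}/2\mathbb{Z})^k$, $\beta\in(\mathbb{Z}/2\mathbb{Z})^\ell$. If $\mathbf{P}$ is an interpolatory $k$-cube and $\mathbf{Q}$ is an interpolatory $\ell$-cube, then $\mathbf{S}$ is an interpolatory $(k+\ell)$-cube.
   Context: Elements of $(\mathbb{Z}/2\mathbb{Z})^k$ are strings $\alpha=\alpha_1\cdots\alpha_k$, and $\eta(i)$ has a single $1$ in coordinate $i$. Interpolation operators. For $\lambda,\rho\ge0$, ${}_1\mathrm{I}^\rho_\lambda$ maps $\mathbf{P}:(\mathbb{Z}/2\mathbb{Z})^k\to\mathbb{R}[x]$ to $\mathbf{Q}:(\mathbb{Z}/2\mathbb{Z})^{k-1}\to\mathbb{R}[x]$ with $Q_\alpha=\lambda P_{1\alpha}+\rho P_{0\alpha}$. For $k$-tuples $\lambda=(\lambda_1,\ldots,\lambda_k)$ and $\rho=(\rho_1,\ldots,\rho_k)$ of nonnegative reals, $\mathbb{I}^\rho_\lambda={}_1\mathrm{I}^{\rho_k}_{\lambda_k}\cdots{}_1\mathrm{I}^{\rho_1}_{\lambda_1}$, which yields a single polynomial. Flip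 operators. $(\Phi_i\mathbf{P})_\alpha=xP_{\alpha+\eta(i)}$ if $\alpha_i=0$, and $=P_{\alpha+\eta(i)}$ if $\alpha_i=1$. For $S\subseteq\{1,\ldots,k\}$, $\Phi_S=\prod_{i\in S}\Phi_i$. Interpolatory $k$-cubes. $\mathbf{P}$ is an interpolatory $k$-cube if, for all $k$-tuples $\lambda,\rho$ of positive reals and all $S\subseteq\{1,\ldots,k\}$, $\mathbb{I}^\rho_\lambda\Phi_S\mathbf{P}$ is standard and has only nonpositive zeros. For $k=0$ this means the single polynomial is standard with only nonpositive zeros. Standard means $\equiv0$ or positive leading coefficient. Only nonpositive zeros means $\equiv0$ or all zeros real and $\le0$. *)

(* Defs.v *)
From HB Require Import structures.
From mathcomp Require Import all_boot all_order all_algebra.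
From mathcomp Require Import reals.
Set Implicit Arguments. Unset Strict Implicit. Unset Printing Implicit Defensive.
Import Order.TTheory GRing.Theory Num.Theory.
Local Open Scope ring_scope.

Section Cubes.
Variable R : realType.

(* A map (Z/2Z)^k -> R[x]; alpha = alpha_1 ... alpha_k is a k-tuple of bits,
   tnth alpha i being coordinate i+1 (0-based index). *)
Definition cube (k : nat) := k.-tuple bool -> {poly R}.

Definition interp1 (k : nat) (lam rho : R) (P : cube k.+1) : cube k :=
  fun a => lam *: P [tuple of true :: a] + rho *: P [tuple of false :: a].

(* I^rho_lambda = _1I^{rho_k}_{lambda_k} ... _1I^{rho_1}_{lambda_1}
   (first applies lambda_1, rho_1), yielding a single polynomial. *)
Fixpoint interp (k : nat) : k.-tuple R -> k.-tuple R -> cube k -> {poly R} :=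
  match k return k.-tuple R -> k.-tuple R -> cube k -> {poly R} with
  | 0 => fun _ _ P => P [tuple]
  | k'.+1 => fun lam rho P =>
      interp (behead_tuple lam) (behead_tuple rho) (interp1 (thead lam) (thead rho) P)
  end.

Definition flip_tup (k : nat) (i : 'I_k) (a : k.-tuple bool) : k.-tuple bool :=
  [tuple (if j == i then ~~ tnth a j else tnth a j) | j < k].

Definition Phi (k : nat) (i : 'I_k) (P : cube k) : cube k :=
  fun a => if tnth a i then P (flip_tup i a) else 'X * P (flip_tup i a).

Definition PhiS (k : nat) (S : {set 'I_k}) (P : cube k) : cube k :=
  foldr (@Phi k) P (enum S).

Definition standard (p : {poly R}) : Prop := p = 0 \/ 0 < lead_coef p.

(* only nonpositive zeros: identically zero, or all (complex) zeros are real
   and <= 0, i.e. p splits over R into linear factors with roots <= 0. *)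
Definition nonpos_zeros (p : {poly R}) : Prop :=
  p = 0 \/ exists s : seq R, all (fun r => r <= 0) s /\
                          p = lead_coef p *: \prod_(r <- s) ('X - r%:P).

Definition interpolatory (k : nat) (P : cube k) : Prop :=
  forall (lam rho : k.-tuple R),
    (forall i, 0 < tnth lam i) -> (forall i, 0 < tnth rho i) ->
    forall S : {set 'I_k},
      standard (interp lam rho (PhiS S P)) /\ nonpos_zeros (interp lam rho (PhiS S P)).

End Cubes.

(* Main.v *)
Require Import Defs.
From HB Require Import structures.
From mathcomp Require Import all_boot all_order all_algebra.
From mathcomp Require Import reals.
Set Implicit Arguments. Unset Strict Implicit. Unset Printing Implicit Defensive.
Import Order.TTheory GRing.Theory Num.Theory.
Local Open Scope ring_scope.

Section Aux.
Variable R : realType.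

Lemma interpS n (lam rho : n.+1.-tuple R) (P : cube R n.+1) :
  interp lam rho P = interp (behead_tuple lam) (behead_tuple rho) (interp1 (thead lam) (thead rho) P).
Proof. by []. Qed.

Lemma interp_ext n (lam rho : n.-tuple R) (P P' : cube R n) :
  (forall a, P a = P' a) -> interp lam rho P = interp lam rho P'.
Proof.
elim: n lam rho P P' => [|n IH] lam rho P P' e; first by rewrite /= e.
rewrite !interpS; apply: IH => a; by rewrite /interp1 !e.
Qed.

Lemma interp_scale n (lam rho : n.-tuple R) (P : cube R n) c :
  interp lam rho (fun a => c * P a) = c * interp lam rho P.
Proof.
elim: n lam rho P => [|n IH] lam rho P; first by [].
rewrite !interpS -IH; apply: interp_ext => a.
by rewrite /interp1 !scalerAr mulrDr.
Qed.

Definition prodc k l (P : cube R k) (Q : cube R l) (S : cube R (k + l)) :=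
  forall a b, S (cat_tuple a b) = P a * Q b.

Lemma behead_cat (T : Type) n m (t : n.+1.-tuple T) (u : m.-tuple T) :
  behead_tuple (cat_tuple t u) = cat_tuple (behead_tuple t) u :> (n+m).-tuple T.
Proof. by apply: val_inj; case: t => [[|x s] //]. Qed.
Lemma thead_cat (T : Type) n m (t : n.+1.-tuple T) (u : m.-tuple T) :
  thead (cat_tuple t u) = thead t.
Proof. by case: t => [[|x s] //]. Qed.

Lemma interp_prod k l (lam1 rho1 : k.-tuple R) (lam2 rho2 : l.-tuple R) P Q S :
  @prodc k l P Q S ->
  interp (cat_tuple lam1 lam2) (cat_tuple rho1 rho2) S = interp lam1 rho1 P * interp lam2 rho2 Q.
Proof.
elim: k lam1 rho1 P S => [|k IH] lam1 rho1 P S hS.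
  have e1 : cat_tuple lam1 lam2 = lam2 by apply: val_inj; rewrite /= tuple0.
  have e2 : cat_tuple rho1 rho2 = rho2 by apply: val_inj; rewrite /= tuple0.
  rewrite e1 e2 /= -interp_scale; apply: interp_ext => b.
  have := hS [tuple] b.
  have -> : cat_tuple [tuple] b = b by apply: val_inj.
  by [].
rewrite (interpS (n := k + l)) interpS.
have e3 : thead (cat_tuple lam1 lam2) = thead lam1 by exact: thead_cat.
have e4 : thead (cat_tuple rho1 rho2) = thead rho1 by exact: thead_cat.
have e1 : behead_tuple (cat_tuple lam1 lam2) = cat_tuple (behead_tuple lam1) lam2 :> (k+l).-tuple R.
  exact: behead_cat.
have e2 : behead_tuple (cat_tuple rho1 rho2) = cat_tuple (behead_tuple rho1) rho2 :> (k+l).-tuple R.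
  exact: behead_cat.
rewrite e1 e2 e3 e4; apply: IH => a b.
rewrite /interp1.
have -> : [tuple of true :: cat_tuple a b] = cat_tuple [tuple of true :: a] b :> (k.+1 + l).-tuple bool by apply: val_inj.
have -> : [tuple of false :: cat_tuple a b] = cat_tuple [tuple of false :: a] b :> (k.+1 + l).-tuple bool by apply: val_inj.
by rewrite !hS mulrDl !scalerAl.
Qed.

Lemma foldr_Phi n (P : cube R n) (s : seq 'I_n) a : uniq s ->
  foldr (@Phi R n) P s a =
  (\prod_(i <- s | ~~ tnth a i) 'X) * P [tuple tnth a j (+) (j \in s) | j < n].
Proof.
elim: s a => [|i s IH] a /=.
  move=> _; rewrite big_nil mul1r; congr (P _).
  by apply: eq_from_tnth => j; rewrite tnth_mktuple addbF.
case/andP => nis us.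
rewrite /Phi IH // big_cons.
have E1 : \prod_(j <- s | ~~ tnth (flip_tup i a) j) 'X = \prod_(j <- s | ~~ tnth a j) ('X : {poly R}).
  rewrite big_seq_cond [RHS]big_seq_cond; apply: eq_bigl => j.
  rewrite /flip_tup tnth_mktuple.
  by case: eqP => [->|//]; rewrite (negbTE nis).
have E2 : [tuple tnth (flip_tup i a) j (+) (j \in s) | j < n] = [tuple tnth a j (+) (j \in i :: s) | j < n].
  apply: eq_from_tnth => j; rewrite !tnth_mktuple /flip_tup ?tnth_mktuple in_cons.
  case: eqP => [->|//]; rewrite (negbTE nis) /=.
  by case: (tnth a i).
rewrite E1 E2.
by case: (tnth a i) => /=; rewrite ?mulrA.
Qed.

Definition flipT n (T : {set 'I_n}) (a : n.-tuple bool) :=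
  [tuple tnth a j (+) (j \in T) | j < n].

Lemma PhiSE n (P : cube R n) (T : {set 'I_n}) a :
  PhiS T P a = (\prod_(i in T | ~~ tnth a i) 'X) * P (flipT T a).
Proof.
rewrite /PhiS foldr_Phi ?enum_uniq // big_enum_cond /flipT.
congr (_ * P _); apply: eq_from_tnth => j; by rewrite !tnth_mktuple mem_enum.
Qed.

Lemma PhiS_prod k l (P : cube R k) (Q : cube R l) (S : cube R (k + l)) (T : {set 'I_(k + l)}) :
  prodc P Q S ->
  prodc (PhiS [set i | lshift l i \in T] P) (PhiS [set j | rshift k j \in T] Q) (PhiS T S).
Proof.
move=> hS a b; rewrite !PhiSE.
have -> : flipT T (cat_tuple a b) = cat_tuple (flipT [set i | lshift l i \in T] a) (flipT [set j | rshift k j \in T] b).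
  apply: eq_from_tnth => x; rewrite -(splitK x); case: (split x) => y /=.
    by rewrite tnth_lshift !tnth_mktuple tnth_lshift inE.
  by rewrite tnth_rshift !tnth_mktuple tnth_rshift inE.
rewrite hS big_mkcond big_split_ord /= -!big_mkcond.
rewrite (eq_bigl (fun i => (i \in [set i0 | lshift l i0 \in T]) && ~~ tnth a i)); last first.
  by move=> i; rewrite inE; congr (_ && ~~ _); exact: tnth_lshift.
rewrite [X in _ * X * _](eq_bigl (fun i => (i \in [set i0 | rshift k i0 \in T]) && ~~ tnth b i)); last first.
  by move=> i; rewrite inE; congr (_ && ~~ _); exact: tnth_rshift.
by rewrite mulrACA.
Qed.

Lemma standardM (p q : {poly R}) : standard p -> standard q -> standard (p * q).
Proof.
move=> [->|hp]; first by left; rewrite mul0r.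
move=> [->|hq]; first by left; rewrite mulr0.
by right; rewrite lead_coefM mulr_gt0.
Qed.

Lemma nonposM (p q : {poly R}) : nonpos_zeros p -> nonpos_zeros q -> nonpos_zeros (p * q).
Proof.
move=> [->|[s [hs ep]]]; first by left; rewrite mul0r.
move=> [->|[t [ht eq]]]; first by left; rewrite mulr0.
right; exists (s ++ t); split; first by rewrite all_cat hs ht.
rewrite lead_coefM big_cat /= {1}ep {1}eq.
by rewrite -scalerAl -scalerAr scalerA.
Qed.
End Aux.
Unset Implicit Arguments.
Set Strict Implicit.

Theorem lemma4p6 (R : realType) (k l : nat) (P : cube R k) (Q : cube R l)
    (S : cube R (k + l)) :
  (forall (a : k.-tuple bool) (b : l.-tuple bool), S (cat_tuple a b) = P a * Q b) ->
  interpolatory P -> interpolatory Q -> interpolatory S.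
Proof.
move=> hS iP iQ lam rho hl hr T.
pose lam1 := [tuple tnth lam (lshift l i) | i < k].
pose lam2 := [tuple tnth lam (rshift k i) | i < l].
pose rho1 := [tuple tnth rho (lshift l i) | i < k].
pose rho2 := [tuple tnth rho (rshift k i) | i < l].
have el : lam = cat_tuple lam1 lam2.
  apply: eq_from_tnth => x; rewrite -(splitK x); case: (split x) => y /=.
    by rewrite tnth_lshift tnth_mktuple.
  by rewrite tnth_rshift tnth_mktuple.
have er : rho = cat_tuple rho1 rho2.
  apply: eq_from_tnth => x; rewrite -(splitK x); case: (split x) => y /=.
    by rewrite tnth_lshift tnth_mktuple.
  by rewrite tnth_rshift tnth_mktuple.
rewrite el er (interp_prod _ _ _ _ (PhiS_prod T hS)).
have p1 : forall i, 0 < tnth lam1 i by move=> i; rewrite tnth_mktuple.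
have p2 : forall i, 0 < tnth lam2 i by move=> i; rewrite tnth_mktuple.
have p3 : forall i, 0 < tnth rho1 i by move=> i; rewrite tnth_mktuple.
have p4 : forall i, 0 < tnth rho2 i by move=> i; rewrite tnth_mktuple.
have [h1 h2] := iP lam1 rho1 p1 p3 [set i | lshift l i \in T].
have [h3 h4] := iQ lam2 rho2 p2 p4 [set j | rshift k j \in T].
split; [exact: standardM | exact: nonposM].
Qed.
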